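(* Let $p \ge 2$ and $K \ge 0$ be coprime integers, and let $L, R$ be integers with $0 \le L \le R < p$. Define $G(p,K,L,R)$ recursively by taking the first of the following cases (checked in the order listed) whose condition holds: (a) if $K = 0$ or $L = 0$: $G(p,K,L,R) = 0$; (b) if $K \ge p$: $G(p,K,L,R) = G(p, K \bmod p, L, R)$; (c) if $\lceil L/K \rceil \le \lfloor R/K \rfloor$: $G(p,K,L,R) = \lceil L/K \rceil$; (d) if $2K \ge p$: $G(p,K,L,R) = G(p, p-K, p-R, p-L)$; (e) otherwise: $G(p,K,L,R) = \left\lceil \dfrac{L + p \cdot G\big(K,\ (-p) \bmod K,\ L \bmod K,\ R \bmod K\big)}{K} \right\rceil$. Then the recursion terminates after $O(\log p)$ recursive calls, and $G(p,K,L,R)$ is the smallest nonnegative integer $m$ such that $L \le (mK \bmod p) \le R$.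
   Context: For integers $a$ and $n \ge 1$, $a \bmod n$ denotes the unique representative of $a$ modulo $n$ in $\{0,1,\dots,n-1\}$. The condition ''$L \le mK \le R \bmod p$'' means that the least nonnegative residue of $mK$ modulo $p$ lies in the interval $[L,R]$. Since $\gcd(p,K)=1$, such an $m$ exists (e.g. $m \equiv L K^{-1} \pmod p$). *)

(* Defs.v *)
From mathcomp Require Import all_boot.
Set Implicit Arguments. Unset Strict Implicit. Unset Printing Implicit Defensive.

Definition ceil_div (a d : nat) : nat := (a + d - 1) %/ d.

(* (-p) mod K, least nonnegative residue *)
Definition negmod (p K : nat) : nat := (K - p %% K) %% K.

Fixpoint Gf (fuel p K L R : nat) {struct fuel} : option nat :=
  match fuel with
  | 0 => None
  | n.+1 =>
    if (K == 0) || (L == 0) then Some 0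
    else if p <= K then Gf n p (K %% p) L R
    else if ceil_div L K <= R %/ K then Some (ceil_div L K)
    else if p <= K.*2 then Gf n p (p - K) (p - R) (p - L)
    else match Gf n K (negmod p K) (L %% K) (R %% K) with
         | Some g => Some (ceil_div (L + p * g) K)
         | None => None
         end
  end.

(* Main.v *)
Require Import Defs.
From mathcomp Require Import all_boot.
From mathcomp Require Import zify.

Definition sol p K L R m := L <= (m * K) %% p <= R.
Definition isMin p K L R m := sol p K L R m /\ forall m', sol p K L R m' -> m <= m'.

Lemma ceilP a K m : 0 < K -> (ceil_div a K <= m) = (a <= m * K).
Proof.
move=> K0; rewrite /ceil_div -ltnS ltn_divLR //.
apply/idP/idP; lia.
Qed.

Lemma coprime_subr p K : K <= p -> coprime p (p - K) = coprime p K.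
Proof.
move=> Kp; rewrite /coprime.
have E : p = (p - K) + K by rewrite subnK.
have -> : gcdn p (p - K) = gcdn (p - K) K by rewrite gcdnC {2}E gcdnDl.
have -> : gcdn p K = gcdn K (p - K) by rewrite gcdnC {1}E gcdnDr.
by rewrite gcdnC.
Qed.

Lemma solE p K L R m : 0 < p -> R < p ->
  sol p K L R m <-> exists j, L + j * p <= m * K <= R + j * p.
Proof.
move=> p0 Rp; rewrite /sol; split.
  move=> H; exists ((m * K) %/ p).
  have E1 := divn_eq (m * K) p; have E2 := ltn_pmod (m * K) p0.
  move: H E1 E2; set q := (m * K) %/ p; set r := (m * K) %% p; set x := m * K.
  move=> H E1 E2; rewrite -/x; lia.
case=> j /andP [H1 H2].
have E : m * K = j * p + (m * K - j * p) by lia.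
rewrite E modnMDl modn_small; lia.
Qed.

Lemma sol_d p K L R m : 0 < L -> R < p -> K <= p ->
  sol p K L R m <-> sol p (p - K) (p - R) (p - L) m.
Proof.
move=> L0 Rp Kp.
have p0 : 0 < p by lia.
rewrite (solE _ _ _ _ _ p0 Rp) (solE _ _ _ _ _ p0 _); last by lia.
have mKp : m * K <= m * p by rewrite leq_mul2l Kp orbT.
rewrite mulnBr.
split.
  case=> j /andP [H1 H2].
  have jm : j < m by rewrite -(ltn_pmul2r p0); lia.
  exists (m - 1 - j).
  have E : m * p = (m - 1 - j) * p + j * p + p.
    by rewrite {1}(_ : m = (m - 1 - j) + j + 1) ?mulnDl ?mul1n //; lia.
  lia.
case=> i /andP [H1 H2].
have im : i < m by rewrite -(ltn_pmul2r p0); lia.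
exists (m - 1 - i).
have E : m * p = (m - 1 - i) * p + i * p + p.
  by rewrite {1}(_ : m = (m - 1 - i) + i + 1) ?mulnDl ?mul1n //; lia.
lia.
Qed.
Lemma negmodP p K j : 0 < K -> (((j * negmod p K) %% K) + j * p) %% K = 0.
Proof.
move=> K0; rewrite modnDml -mulnDr -modnMmr.
have -> : (negmod p K + p) %% K = 0.
  rewrite /negmod modnDml -modnDmr addnBAC; last by apply: ltnW; rewrite ltn_pmod.
  by rewrite addnK modnn.
by rewrite muln0 mod0n.
Qed.

Lemma S_equiv p K j l r : 0 < K -> r < K ->
  (l <= (j * negmod p K) %% K <= r) <-> exists i, l + j * p <= i * K <= r + j * p.
Proof.
move=> K0 rK; have N := negmodP p K j K0.
set x := (j * negmod p K) %% K.
have xK : x < K by rewrite ltn_pmod.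
split.
  move=> H; exists ((x + j * p) %/ K).
  have E := divn_eq (x + j * p) K; rewrite N addn0 in E; lia.
case=> i /andP [H1 H2].
have E : i * K = (i * K - j * p) + j * p by lia.
have : x == i * K - j * p %[mod K].
  by rewrite -(eqn_modDr (j * p)) -E N modnMl.
rewrite (modn_small xK) modn_small; last by lia.
move/eqP=> ->; lia.
Qed.

Lemma sol_e p K L R g : 0 < K -> 0 < p -> R < p -> L %/ K = R %/ K ->
  isMin K (negmod p K) (L %% K) (R %% K) g ->
  isMin p K L R (ceil_div (L + p * g) K).
Proof.
move=> K0 p0 Rp Eq [Hg Hmin].
have EL := divn_eq L K; have ER := divn_eq R K.
have lK := ltn_pmod L K0; have rK := ltn_pmod R K0.
set q := R %/ K in Eq ER; rewrite Eq in EL.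
set l := L %% K in EL lK Hg Hmin; set r := R %% K in ER rK Hg Hmin.
have key : forall j, sol K (negmod p K) l r j <-> exists m, L + j * p <= m * K <= R + j * p.
  move=> j; rewrite /sol (S_equiv p K j l r K0 rK); split.
    case=> i H; exists (i + q); rewrite mulnDl; lia.
  case=> m /andP [H1 H2].
  have qm : q <= m by rewrite -(leq_pmul2r K0); lia.
  exists (m - q); rewrite mulnBl; lia.
have ceilK : forall m, (ceil_div (L + p * g) K <= m) = (L + g * p <= m * K).
  by move=> m; rewrite ceilP // mulnC.
split.
  apply/(solE _ _ _ _ _ p0 Rp); exists g.
  case: (key g) => [/(_ Hg) [m /andP [H1 H2]] _].
  have := ceilK (ceil_div (L + p * g) K); rewrite leqnn => /esym H3.
  have : ceil_div (L + p * g) K <= m by rewrite ceilK.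
  rewrite -(leq_pmul2r K0) => H4.
  lia.
move=> m' /(solE _ _ _ _ _ p0 Rp) [j Hj].
have gj : g <= j by apply: Hmin; apply/key; exists m'.
rewrite ceilK.
have : g * p <= j * p by rewrite leq_mul2r gj orbT.
lia.
Qed.

Lemma sol_c p K L R : 0 < K -> R < p -> ceil_div L K <= R %/ K ->
  isMin p K L R (ceil_div L K).
Proof.
move=> K0 Rp Hc.
have H1 : L <= ceil_div L K * K by rewrite -ceilP.
have H2 : ceil_div L K * K <= R by rewrite -leq_divRL.
split.
  by rewrite /sol modn_small ?H1 ?H2 //; lia.
move=> m' Hm; rewrite leqNgt; apply/negP => lt.
have : ~~ (L <= m' * K) by rewrite -ceilP // -ltnNge.
move: Hm; rewrite /sol modn_small; last first.
  have : m' * K <= ceil_div L K * K by rewrite leq_pmul2r // ltnW.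
  lia.
case/andP=> ->.
done.
Qed.

Lemma GfS n p K L R : Gf n.+1 p K L R =
    if (K == 0) || (L == 0) then Some 0
    else if p <= K then Gf n p (K %% p) L R
    else if ceil_div L K <= R %/ K then Some (ceil_div L K)
    else if p <= K.*2 then Gf n p (p - K) (p - R) (p - L)
    else match Gf n K (negmod p K) (L %% K) (R %% K) with
         | Some g => Some (ceil_div (L + p * g) K)
         | None => None
         end.
Proof. by []. Qed.

Lemma isMin0 p K R : 0 < p -> isMin p K 0 R 0.
Proof. by move=> p0; split; [rewrite /sol mul0n mod0n | move=> m _]. Qed.

Definition P p := forall n K L R, 2 <= p -> 0 < K < p -> coprime p K -> L <= R < p ->
  (trunc_log 2 p).*2 + 2 <= n -> exists m, Gf n p K L R = Some m /\ isMin p K L R m.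

Lemma tl_lt K p : 0 < K -> K.*2 < p -> (trunc_log 2 K).+1 <= trunc_log 2 p.
Proof.
move=> K0 Kp; rewrite -trunc_log2_double //; apply: leq_trunc_log; lia.
Qed.

Lemma coprime_negmod p K : 0 < K -> coprime p K -> coprime K (negmod p K).
Proof.
move=> K0 c; rewrite /negmod coprime_modr coprime_subr; last by apply: ltnW; rewrite ltn_pmod.
by rewrite coprime_modr coprime_sym.
Qed.

Lemma stepA p (IH : forall p', p' < p -> P p') n K L R :
  2 <= p -> 0 < K -> (K.*2 < p \/ K = 1) -> coprime p K -> L <= R < p ->
  (trunc_log 2 p).*2 + 1 <= n -> exists m, Gf n p K L R = Some m /\ isMin p K L R m.
Proof.
move=> p2 K0 HK cop /andP [LR Rp] Hn.
case: n Hn => [|n] Hn; first lia.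
rewrite GfS.
have -> : (K == 0) = false by lia.
have [L0|L0] : L = 0 \/ 0 < L by lia.
  by rewrite L0 /=; exists 0; split => //; apply: isMin0; lia.
have -> : (L == 0) = false by lia.
have -> : (p <= K) = false by lia.
rewrite /=.
case: ifP => Hc.
  by exists (ceil_div L K); split => //; apply: sol_c.
have K2 : K.*2 < p.
  case: HK => // K1; subst K; move: Hc; rewrite /ceil_div divn1 subn1 addn1 /=.
  by rewrite divn1 LR.
have -> : (p <= K.*2) = false by lia.
have K1 : 1 < K.
  case: (leqP K 1) => // ?; have E : K = 1 by lia.
  by move: Hc; rewrite E /ceil_div !divn1 subn1 addn1 /= LR.
have Eq : L %/ K = R %/ K.
  have a1 : L %/ K <= R %/ K by apply: leq_div2r.
  have a2 : ceil_div L K <= (L %/ K).+1.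
    rewrite ceilP //; have := divn_eq L K; have := ltn_pmod L K0; lia.
  move: Hc => /negbT; rewrite -ltnNge => a3; lia.
have lr : L %% K <= R %% K.
  have := divn_eq L K; have := divn_eq R K; rewrite Eq; lia.
have ncop := coprime_negmod p K K0 cop.
have nm0 : 0 < negmod p K.
  case: (posnP (negmod p K)) => // E; move: ncop; rewrite E /coprime gcdn0; lia.
have nmK : negmod p K < K by rewrite /negmod ltn_pmod.
have tl := tl_lt K p K0 K2.
have [g [Hg Hmin]] : exists g, Gf n K (negmod p K) (L %% K) (R %% K) = Some g /\
    isMin K (negmod p K) (L %% K) (R %% K) g.
  apply: (IH K) => //; first lia.
  - by rewrite nm0 nmK.
  - by rewrite lr ltn_pmod.
  - lia.
rewrite Hg; exists (ceil_div (L + p * g) K); split => //.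
apply: sol_e => //; lia.
Qed.

Lemma stepB p (IH : forall p', p' < p -> P p') : P p.
Proof.
move=> n K L R p2 /andP [K0 Kp] cop /andP [LR Rp] Hn.
case: (leqP p K.*2) => hd; last first.
  apply: stepA => //; [by left | by rewrite LR | lia].
case: n Hn => [|n] Hn; first lia.
rewrite GfS.
have -> : (K == 0) = false by lia.
have [L0|L0] : L = 0 \/ 0 < L by lia.
  by rewrite L0 /=; exists 0; split => //; apply: isMin0; lia.
have -> : (L == 0) = false by lia.
have -> : (p <= K) = false by lia.
rewrite /=.
case: ifP => Hc.
  by exists (ceil_div L K); split => //; apply: sol_c.
rewrite hd.
have cop' : coprime p (p - K) by rewrite coprime_subr // ltnW.
have [m [Hm [Hs Hmin]]] : exists m, Gf n p (p - K) (p - R) (p - L) = Some m /\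
    isMin p (p - K) (p - R) (p - L) m.
  apply: stepA => //; try lia.
    case: (ltngtP (p - K).*2 p) => E; [by left | lia | right].
    move: cop'; rewrite /coprime -{1}E -muln2 mulnC gcdnC gcdnMl; lia.
exists m; split => //; split.
  by have [_ H] := sol_d p K L R m L0 Rp (ltnW Kp); exact: H.
move=> m' Hm'; apply: Hmin; have [H _] := sol_d p K L R m' L0 Rp (ltnW Kp); exact: H.
Qed.

Lemma coreP p : P p.
Proof. elim/ltn_ind: p => p IH; exact: stepB. Qed.

Theorem mainTheorem1 :
  exists c : nat, forall p K L R : nat,
    2 <= p -> coprime p K -> L <= R -> R < p ->
    exists m : nat,
      Gf (c * (trunc_log 2 p).+1) p K L R = Some m /\
      L <= (m * K) %% p <= R /\
      (forall m' : nat, L <= (m' * K) %% p <= R -> m <= m').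
Proof.
exists 3 => p K L R p2 cop LR Rp.
suff [m [H1 [H2 H3]]] : exists m, Gf (3 * (trunc_log 2 p).+1) p K L R = Some m /\ isMin p K L R m.
  by exists m.
have K0 : 0 < K.
  case: (posnP K) => // E; move: cop; rewrite E /coprime gcdn0; lia.
case: (ltnP K p) => Kp.
  apply: coreP => //; [by rewrite K0 | by rewrite LR | lia].
have -> : 3 * (trunc_log 2 p).+1 = ((trunc_log 2 p) * 3 + 2).+1 by lia.
rewrite GfS.
have -> : (K == 0) = false by lia.
have [L0|L0] : L = 0 \/ 0 < L by lia.
  by rewrite L0 /=; exists 0; split => //; apply: isMin0; lia.
have -> : (L == 0) = false by lia.
rewrite /= Kp.
have cop' : coprime p (K %% p) by rewrite coprime_modr.
have Km0 : 0 < K %% p.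
  case: (posnP (K %% p)) => // E; move: cop'; rewrite E /coprime gcdn0; lia.
have Hs : forall m, sol p (K %% p) L R m = sol p K L R m.
  by move=> m; rewrite /sol modnMmr.
have [m [Hm [Hs1 Hmin]]] : exists m, Gf (trunc_log 2 p * 3 + 2) p (K %% p) L R = Some m /\
    isMin p (K %% p) L R m.
  apply: coreP => //; [by rewrite Km0 ltn_pmod; lia | by rewrite LR | lia].
exists m; split => //; split; first by rewrite -Hs.
by move=> m' Hm'; apply: Hmin; rewrite Hs.
Qed.
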